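(* Let $D=(V,A)$ be a digraph, $\{S,T\}$ a partition of $V$ with $S,T\ne\emptyset$, $H=A[S,T]$ the set of arcs from $S$ to $T$, and $k$ an integer. Let $\mathcal{C}_1=\{\delta^-_H(U):\emptyset\neq U\subseteq T\}$ and define $g_1:\mathcal{C}_1\to\mathbb{Z}$ by $g_1(C)=\max\{k-d^-_{A[T]}(U): \emptyset\ne U\subseteq T,\ C=\delta^-_H(U)\}$. Then $\mathcal{C}_1$ is an intersecting family on $H$ and $g_1$ is intersecting supermodular. Moreover, if $k\le \min\{|\delta^-_A(U)|:\emptyset\neq U\subseteq T\}$, then $g_1(C)\le\min\{k,|C|\}$ for every $C\in\mathcal{C}_1$.
   Context: For $B\subseteq A$ and $U\subseteq V$, $\delta^-_B(U)$ is the set of arcs of $B$ entering $U$ and $d^-_B(U)=|\delta^-_B(U)|$; $A[T]$ is the set of arcs with both ends in $T$. A family $\mathcal{C}\subseteq 2^H$ is intersecting if $X\cup Y,X\cap Y\in\mathcal{C}$ whenever $X,Y\in\mathcal{C}$ and $X\cap Y\ne\emptyset$; $g:\mathcal{C}\to\mathbb{R}$ is intersecting supermodular if $g(X)+g(Y)\le g(X\cup Y)+g(X\cap Y)$ for all such $X,Y$. *)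

(* Defs.v *)
(* A digraph D = (V, A) is a finite vertex type V, a finite
   arc type A (parallel arcs and loops allowed) and tail/head maps A -> V. *)
From HB Require Import structures.
From mathcomp Require Import all_boot all_order all_algebra.
Set Implicit Arguments. Unset Strict Implicit. Unset Printing Implicit Defensive.
Import Order.TTheory GRing.Theory Num.Theory.

Section Digraph.
Variables (V A : finType) (tail head : A -> V).

Definition din (B : {set A}) (U : {set V}) : {set A} :=
  [set a in B | (head a \in U) && (tail a \notin U)].

Definition ddin (B : {set A}) (U : {set V}) : nat := #|din B U|.

Definition arcs_between (X Y : {set V}) : {set A} :=
  [set a | (tail a \in X) && (head a \in Y)].

Definition induced (X : {set V}) : {set A} := arcs_between X X.

Definition C1 (S T : {set V}) : {set {set A}} :=
  [set din (arcs_between S T) U | U in [set U : {set V} | (U != set0) && (U \subset T)]].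

(* The default k - |A| of the iterated max is a lower bound of every term
   (d^-_{A[T]}(U) <= |A|), so it does not affect the value on C_1. *)
Definition g1 (S T : {set V}) (k : int) (C : {set A}) : int :=
  \big[Num.max/(k - (#|A|)%:Z)%R]_(U : {set V} |
      (U != set0) && (U \subset T) && (C == din (arcs_between S T) U))
    (k - (ddin (induced T) U)%:Z)%R.

End Digraph.

Definition intersecting_family (X : finType) (H : {set X}) (F : {set {set X}}) : Prop :=
  (forall C, C \in F -> C \subset H) /\
  (forall C1 C2, C1 \in F -> C2 \in F -> C1 :&: C2 != set0 ->
     (C1 :|: C2 \in F) /\ (C1 :&: C2 \in F)).

Definition intersecting_supermodular (X : finType) (F : {set {set X}})
    (g : {set X} -> int) : Prop :=
  forall C1 C2, C1 \in F -> C2 \in F -> C1 :&: C2 != set0 ->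
    (g C1 + g C2 <= g (C1 :|: C2) + g (C1 :&: C2))%R.

(* Main.v *)
Require Import Defs.
From HB Require Import structures.
From mathcomp Require Import all_boot all_order all_algebra.
From mathcomp Require Import zify ring lra.
Import Order.TTheory GRing.Theory Num.Theory.
Local Open Scope ring_scope.

Section Aux.
Variables (V A : finType) (tail head : A -> V).

Lemma din_sub (B : {set A}) (X Y : {set V}) :
  (ddin tail head B (X :|: Y) + ddin tail head B (X :&: Y) <=
   ddin tail head B X + ddin tail head B Y)%N.
Proof.
rewrite /ddin -(cardsUI (din tail head B X)) -(cardsUI (din tail head B (X :|: Y))).
apply: leq_add; apply: subset_leq_card; apply/subsetP => a;
  rewrite !inE; case: (a \in B); case: (head a \in X); case: (head a \in Y);
  case: (tail a \in X); case: (tail a \in Y) => //.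
Qed.

Lemma ddin_le (B : {set A}) U : (ddin tail head B U <= #|A|)%N.
Proof. exact: max_card. Qed.

Lemma dinH (S T U : {set V}) : U \subset T -> S :&: T = set0 ->
  din tail head (arcs_between tail head S T) U =
  [set a | (tail a \in S) && (head a \in U)].
Proof.
move=> UT ST; apply/setP => a; rewrite !inE.
case tS: (tail a \in S); case hU: (head a \in U); rewrite ?andbF //=.
rewrite (subsetP UT) //=; apply/negP => tU.
have : tail a \in S :&: T by rewrite inE tS (subsetP UT).
by rewrite ST inE.
Qed.

Lemma g1_att (S T : {set V}) k C : C \in C1 tail head S T ->
  exists U, [/\ U != set0, U \subset T, C = din tail head (arcs_between tail head S T) U &
    g1 tail head S T k C = k - (ddin tail head (induced tail head T) U)%:Z].
Proof.
case/imsetP => U0; rewrite inE => /andP[U0n U0T] ->.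
have := @eq_bigmax _ _ _ (k - (#|A|)%:Z) U0
  (fun U : {set V} => (U != set0) && (U \subset T) && (din tail head (arcs_between tail head S T) U0 == din tail head (arcs_between tail head S T) U))
  (fun U => k - (ddin tail head (induced tail head T) U)%:Z).
case.
- by rewrite /= U0n U0T eqxx.
- move=> i _; rewrite lerD2l lerN2 lez_nat; exact: ddin_le.
move=> U; rewrite unfold_in => /andP[/andP[Un UT] /eqP CU] E.
by exists U; split.
Qed.

Lemma g1_ge (S T : {set V}) k (U : {set V}) : U != set0 -> U \subset T ->
  k - (ddin tail head (induced tail head T) U)%:Z <=
  g1 tail head S T k (din tail head (arcs_between tail head S T) U).
Proof.
move=> Un UT; rewrite /g1.
apply: (le_bigmax_cond _ (fun U => k - (ddin tail head (induced tail head T) U)%:Z)).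
by rewrite Un UT eqxx.
Qed.

End Aux.

Lemma key (V A : finType) (tail head : A -> V) (S T : {set V}) C1' C2' :
   S :&: T = set0 ->
   C1' \in C1 tail head S T -> C2' \in C1 tail head S T ->
   C1' :&: C2' != set0 -> exists U1 U2,
   [/\ U1 != set0, U1 \subset T, U2 != set0, U2 \subset T & U1 :&: U2 != set0] /\
   [/\ C1' = din tail head (arcs_between tail head S T) U1,
       C2' = din tail head (arcs_between tail head S T) U2,
       C1' :|: C2' = din tail head (arcs_between tail head S T) (U1 :|: U2) &
       C1' :&: C2' = din tail head (arcs_between tail head S T) (U1 :&: U2)].
Proof.
move=> ST /imsetP[U1]; rewrite inE => /andP[U1n U1T] ->.
move=> /imsetP[U2]; rewrite inE => /andP[U2n U2T] -> ne.
have UT : U1 :|: U2 \subset T by rewrite subUset U1T U2T.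
have IT : U1 :&: U2 \subset T by rewrite subIset ?U1T.
exists U1, U2; split; last first.
  split => //; rewrite !dinH //; apply/setP => a; rewrite !inE;
  by case: (tail a \in S); case: (head a \in U1); case: (head a \in U2).
split => //.
case/set0Pn: ne => a; rewrite !dinH // !inE => /andP[/andP[_ h1] /andP[_ h2]].
by apply/set0Pn; exists (head a); rewrite inE h1 h2.
Qed.

Theorem mainTheorem5 (V A : finType) (tail head : A -> V) (S T : {set V}) (k : int) :
  S :&: T = set0 -> S :|: T = setT -> S != set0 -> T != set0 ->
  intersecting_family (arcs_between tail head S T) (C1 tail head S T) /\
  intersecting_supermodular (C1 tail head S T) (g1 tail head S T k) /\
  ((forall U : {set V}, U != set0 -> U \subset T ->
      (k <= (ddin tail head setT U)%:Z)%R) ->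
   forall C, C \in C1 tail head S T ->
     (g1 tail head S T k C <= Num.min k (#|C|)%:Z)%R).
Proof.
move=> ST SUT _ _.
split; [split|split].
- move=> C /imsetP[U]; rewrite inE => /andP[_ UT] ->; rewrite dinH //.
  apply/subsetP => a; rewrite !inE => /andP[-> /(subsetP UT) ->] //.
- move=> C1' C2' h1 h2 ne.
  have [U1 [U2 [[U1n U1T U2n U2T In] [_ _ -> ->]]]] := @key _ _ _ _ _ _ _ _ ST h1 h2 ne.
  split; apply/imsetP.
    exists (U1 :|: U2); last by [].
    by rewrite inE subUset U1T U2T !andbT setU_eq0 negb_and U1n.
  exists (U1 :&: U2); last by [].
  by rewrite inE In subIset ?U1T /=.
- move=> C1' C2' h1 h2 ne.
  have [W1 [W1n W1T EW1 ->]] := @g1_att _ _ _ _ _ _ k _ h1.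
  have [W2 [W2n W2T EW2 ->]] := @g1_att _ _ _ _ _ _ k _ h2.
  have UT : W1 :|: W2 \subset T by rewrite subUset W1T W2T.
  have IT : W1 :&: W2 \subset T by rewrite subIset ?W1T.
  have EU : C1' :|: C2' = din tail head (arcs_between tail head S T) (W1 :|: W2).
    rewrite EW1 EW2 !dinH //; apply/setP => a; rewrite !inE;
    by case: (tail a \in S); case: (head a \in W1); case: (head a \in W2).
  have EI : C1' :&: C2' = din tail head (arcs_between tail head S T) (W1 :&: W2).
    rewrite EW1 EW2 !dinH //; apply/setP => a; rewrite !inE;
    by case: (tail a \in S); case: (head a \in W1); case: (head a \in W2).
  have In : W1 :&: W2 != set0.
    move: ne; rewrite EI; case/set0Pn => a; rewrite dinH // !inE => /andP[_ h].
    by apply/set0Pn; exists (head a); rewrite inE.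
  have UN : W1 :|: W2 != set0 by rewrite setU_eq0 negb_and W1n.
  rewrite EU EI.
  apply: le_trans (lerD (@g1_ge _ _ tail head S T k _ UN UT) (@g1_ge _ _ tail head S T k _ In IT)).
  have := @din_sub _ _ tail head (induced tail head T) W1 W2.
  move: (ddin _ _ _ W1) (ddin _ _ _ W2) (ddin _ _ _ (W1 :|: W2)) (ddin _ _ _ (W1 :&: W2)) => a b c d.
  lia.
- move=> hk C hC.
  have [W [Wn WT EW ->]] := @g1_att _ _ _ _ _ _ k _ hC.
  have hW := hk W Wn WT.
  have sub : (ddin tail head setT W <= ddin tail head (induced tail head T) W + #|C|)%N.
    rewrite EW /ddin; apply: leq_trans (leq_card_setU _ _).
    apply: subset_leq_card; apply/subsetP => a; rewrite !inE /=.
    move=> /andP[hW' tW]; rewrite hW' tW /=.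
    have : tail a \in S :|: T by rewrite SUT inE.
    rewrite inE (subsetP WT _ hW') => /orP[->|->]; by rewrite ?orbT.
  rewrite le_min; apply/andP; split.
    by rewrite lerBlDr lerDl.
  move: hW sub; rewrite /ddin.
  move: (#|din _ _ _ W|) (#|din _ _ (induced _ _ _) W|) (#|C|) => a b c.
  lia.
Qed.
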